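(* Let $\mathbb{F}$ be a field and let $\mathcal{A}$ be a unital $\mathbb{F}$-algebra of dimension $n>2$. Then $l(\mathcal{A})=2^{n-2}$ if and only if $\mathcal{A}$ has a long basis $E=\{e_0,e_1,\ldots,e_{n-1}\}$ such that $e_pe_q\in\langle e_0,\ldots,e_{\max(p,q)}\rangle$ for all $p,q\in\{0,\ldots,n-1\}$ with $p\neq q$.
   Context: Algebras are finite-dimensional, unital, not necessarily associative. For a finite generating set $S$ of $\mathcal{A}$, a word in $S$ is any product (with any bracketing) of finitely many elements of $S$; its length is the number of factors, and $1$ is a word of length $0$. $L_i(S)$ is the linear span of all words in $S$ of length at most $i$. The length of $S$ is $l(S)=\min\{k\ge0: L_k(S)=\mathcal{A}\}$, and $l(\mathcal{A})=\max\{l(S): S\text{ a finite generating set of }\mathcal{A}\}$. (It is known that $2^{n-2}$ is the maximal possible length of such an algebra of dimension $n\ge2$.) A basis $\{e_0,e_1,\ldots,e_{n-1}\}$ of $\mathcal{A}$ is called long if $e_0=1$ and $e_i^2=e_{i+1}$ for $i=1,\ldots,n-2$. $\langle\cdot\rangle$ denotes linear span. *)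

(* Defs.v *)
(* Non-associative unital algebras: a finite-dimensional
   vector space V (vectType) over a field F with a bilinear product [mul]
   and a two-sided unit [one]. *)
From mathcomp Require Import all_boot all_order all_algebra.
Set Implicit Arguments. Unset Strict Implicit. Unset Printing Implicit Defensive.
Import GRing.Theory.
Local Open Scope ring_scope.

Section NonAssocAlgebra.
Variables (F : fieldType) (V : vectType F) (mul : V -> V -> V) (one : V).

(* bracketed words in k letters; Wone is the empty word 1 (length 0) *)
Inductive word (k : nat) : Type :=
  | Wone : word k
  | Wgen : 'I_k -> word k
  | Wmul : word k -> word k -> word k.

Fixpoint word_len k (w : word k) : nat :=
  match w with
  | Wone => 0
  | Wgen _ => 1
  | Wmul u v => word_len u + word_len v
  end.

Fixpoint word_eval (S : seq V) (w : word (size S)) : V :=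
  match w with
  | Wone => one
  | Wgen i => S`_i
  | Wmul u v => mul (word_eval u) (word_eval v)
  end.

Definition in_L (S : seq V) (i : nat) (v : V) : Prop :=
  exists ws : seq (word (size S)),
    all (fun w => word_len w <= i)%N ws /\ v \in span (map (word_eval (S:=S)) ws).

Definition L_full (S : seq V) (i : nat) : Prop := forall v : V, in_L S i v.

Definition generates (S : seq V) : Prop :=
  forall v : V, exists ws : seq (word (size S)),
    v \in span (map (word_eval (S:=S)) ws).

Definition set_length (S : seq V) (k : nat) : Prop :=
  L_full S k /\ forall j, L_full S j -> (k <= j)%N.

Definition alg_length (m : nat) : Prop :=
  (exists S : seq V, generates S /\ set_length S m) /\
  (forall (S : seq V) (k : nat), generates S -> set_length S k -> (k <= m)%N).

Definition long_basis (n : nat) (e : seq V) : Prop :=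
  [/\ size e = n, basis_of fullv e, e`_0 = one &
      forall i, (1 <= i)%N -> (i <= n - 2)%N -> mul e`_i e`_i = e`_i.+1].

End NonAssocAlgebra.

(* Main.v *)
Require Import Defs.
From mathcomp Require Import all_boot all_order all_algebra.
From Stdlib Require Import Classical ClassicalEpsilon.
From mathcomp Require Import zify.
Set Implicit Arguments. Unset Strict Implicit. Unset Printing Implicit Defensive.
Import GRing.Theory.
Local Open Scope ring_scope.

Fixpoint pw (m : nat) : word 1 :=
  match m with 0 => Wgen (@ord0 0) | m'.+1 => Wmul (pw m') (pw m') end.

Lemma pw_len m : word_len (pw m) = (2 ^ m)%N.
Proof. by elim: m => //= m ->; rewrite expnS mul2n addnn. Qed.

Section Infra.
Variables (F : fieldType) (V : vectType F) (mul : V -> V -> V) (one : V).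
Hypothesis mulDl : forall (a : F) (x y z : V), mul (a *: x + y) z = a *: mul x z + mul y z.
Hypothesis mulDr : forall (a : F) (x y z : V), mul z (a *: x + y) = a *: mul z x + mul z y.
Hypothesis mul1x : forall x : V, mul one x = x.
Hypothesis mulx1 : forall x : V, mul x one = x.

Lemma mul0l z : mul 0 z = 0.
Proof.
have := mulDl 1 0 0 z; rewrite scaler0 addr0 scale1r => E.
by apply: (addrI (mul 0 z)); rewrite addr0 -E.
Qed.

Lemma mul0r z : mul z 0 = 0.
Proof.
have := mulDr 1 0 0 z; rewrite scaler0 addr0 scale1r => E.
by apply: (addrI (mul z 0)); rewrite addr0 -E.
Qed.

Lemma mul_suml I (r : seq I) (f : I -> V) (a : I -> F) z :
  mul (\sum_(i <- r) a i *: f i) z = \sum_(i <- r) a i *: mul (f i) z.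
Proof.
elim: r => [|i r IH]; first by rewrite !big_nil mul0l.
by rewrite !big_cons mulDl IH.
Qed.

Lemma mul_sumr I (r : seq I) (f : I -> V) (a : I -> F) z :
  mul z (\sum_(i <- r) a i *: f i) = \sum_(i <- r) a i *: mul z (f i).
Proof.
elim: r => [|i r IH]; first by rewrite !big_nil mul0r.
by rewrite !big_cons mulDr IH.
Qed.

Lemma mul_spanl (X : seq V) (W : {vspace V}) u z :
  u \in <<X>>%VS -> (forall i, (i < size X)%N -> mul X`_i z \in W) -> mul u z \in W.
Proof.
move=> uX H; have := coord_span (X := in_tuple X) uX => ->.
rewrite (mul_suml _ _ (fun i : 'I_(size X) => coord (in_tuple X) i u)).
by apply: memv_suml => i _; apply: memvZ; apply: H.
Qed.

Lemma mul_spanr (X : seq V) (W : {vspace V}) u z :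
  u \in <<X>>%VS -> (forall i, (i < size X)%N -> mul z X`_i \in W) -> mul z u \in W.
Proof.
move=> uX H; have := coord_span (X := in_tuple X) uX => ->.
rewrite (mul_sumr _ _ (fun i : 'I_(size X) => coord (in_tuple X) i u)).
by apply: memv_suml => i _; apply: memvZ; apply: H.
Qed.

Lemma mul_span2 (X Y : seq V) (W : {vspace V}) u v :
  u \in <<X>>%VS -> v \in <<Y>>%VS ->
  (forall i j, (i < size X)%N -> (j < size Y)%N -> mul X`_i Y`_j \in W) -> mul u v \in W.
Proof.
move=> uX vY H; apply: (mul_spanl uX) => i Hi.
by apply: (mul_spanr vY) => j Hj; apply: H.
Qed.

Lemma dim_lt (U W : {vspace V}) x :
  (U <= W)%VS -> x \in W -> x \notin U -> (\dim U < \dim W)%N.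
Proof.
move=> UW xW xU; rewrite ltnNge; apply/negP => dWU.
have : U == W by rewrite eqEdim UW dWU.
by move/eqP => E; move: xU; rewrite E xW.
Qed.



Lemma take_span_mul (e : seq V) p q (W : {vspace V}) u v :
  u \in <<take p.+1 e>>%VS -> v \in <<take q.+1 e>>%VS ->
  (forall i j, (i <= p)%N -> (j <= q)%N -> (i < size e)%N -> (j < size e)%N ->
     mul e`_i e`_j \in W) -> mul u v \in W.
Proof.
move=> Hu Hv H; apply: (mul_span2 Hu Hv) => i j; rewrite !size_take_min !leq_min.
move=> /andP[Hi1 Hi2] /andP[Hj1 Hj2]; rewrite !nth_take //; exact: H.
Qed.

Lemma e_in_take (e : seq V) i k : (i <= k)%N -> (i < size e)%N -> e`_i \in <<take k.+1 e>>%VS.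
Proof.
move=> ik ie; apply: memv_span; rewrite -(nth_take 0 (_ : i < k.+1)%N) //.
by apply: mem_nth; rewrite size_take_min leq_min ltnS ik.
Qed.

Lemma take_mono (e : seq V) k l : (k <= l)%N -> (<<take k.+1 e>> <= <<take l.+1 e>>)%VS.
Proof.
move=> kl; apply/span_subvP => x /(nthP 0)[i]; rewrite size_take_min leq_min => /andP[Hi1 Hi2] <-.
by rewrite nth_take //; apply: e_in_take => //; apply: leq_trans kl.
Qed.

Section Words.
Variable S : seq V.
Local Notation ev := (word_eval mul one (S:=S)).
Local Notation wl := (@word_len (size S)).

Lemma ev_len0 w : wl w = 0%N -> ev w = one.
Proof.
elim: w => //= u IHu v IHv /eqP; rewrite addn_eq0 => /andP[/eqP/IHu -> /eqP/IHv ->].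
by rewrite mul1x.
Qed.

Lemma Lsp_ex i : exists ws : seq (word (size S)),
  all (fun w => wl w <= i)%N ws /\ forall w, (wl w <= i)%N -> ev w \in <<map ev ws>>%VS.
Proof.
suff H : forall c ws0, all (fun w => wl w <= i)%N ws0 ->
    (\dim (fullv : {vspace V}) <= \dim <<map ev ws0>> + c)%N ->
    exists ws : seq (word (size S)),
    all (fun w => wl w <= i)%N ws /\ forall w, (wl w <= i)%N -> ev w \in <<map ev ws>>%VS.
  by apply: (H (\dim (fullv : {vspace V})) [::]) => //; rewrite leq_addl.
elim=> [|c IH] ws0 Hall Hd.
  exists ws0; split => // w _.
  rewrite addn0 in Hd.
  have : (<<map ev ws0>>%VS == fullv) by rewrite eqEdim subvf.
  by move/eqP => ->; apply: memvf.
case: (classic (exists w, (wl w <= i)%N /\ ev w \notin <<map ev ws0>>%VS)).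
  move=> [w [Hw Hn]]; apply: (IH (w :: ws0)); first by rewrite /= Hw.
  rewrite /= span_cons; apply: leq_trans Hd _.
  rewrite addnS -addSn leq_add2r; apply: (dim_lt (x := ev w)) => //.
    exact: addvSr.
  by apply: (subvP (addvSl _ _)); exact: memv_line.
move=> Hno; exists ws0; split => // w Hw.
by apply/negPn/negP => Hn; apply: Hno; exists w.
Qed.

Lemma mem_map_ev (ws : seq (word (size S))) x : x \in map ev ws ->
  exists2 j, (j < size ws)%N & x = ev (nth (Wone _) ws j).
Proof.
move/(nthP 0) => [j]; rewrite size_map => Hj <-; exists j => //.
by rewrite (nth_map (Wone _)).
Qed.

Definition Lws i := proj1_sig (constructive_indefinite_description _ (Lsp_ex i)).
Definition Lsp i := <<map ev (Lws i)>>%VS.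

Lemma Lws_len i : all (fun w => wl w <= i)%N (Lws i).
Proof. by rewrite /Lws; case: constructive_indefinite_description => ws [] . Qed.

Lemma Lsp_word i w : (wl w <= i)%N -> ev w \in Lsp i.
Proof.
move=> Hw; rewrite /Lsp /Lws; case: constructive_indefinite_description => ws [] _ H /=.
exact: H.
Qed.

Lemma Lsp_sub i (U : {vspace V}) : (forall w, (wl w <= i)%N -> ev w \in U) -> (Lsp i <= U)%VS.
Proof.
move=> H; apply/span_subvP => x /mem_map_ev[j Hj ->]; apply: H.
exact: (all_nthP (Wone _) (Lws_len i)).
Qed.

Lemma Lsp_mono i j : (i <= j)%N -> (Lsp i <= Lsp j)%VS.
Proof. by move=> ij; apply: Lsp_sub => w wi; apply: Lsp_word; apply: leq_trans ij. Qed.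

Lemma Lsp_mul a b u v : u \in Lsp a -> v \in Lsp b -> mul u v \in Lsp (a + b).
Proof.
move=> ua vb; apply: (mul_span2 ua vb) => i j; rewrite !size_map => Hi Hj.
rewrite !(nth_map (Wone (size S))) //.
apply: (@Lsp_word _ (Wmul (nth (Wone _) (Lws a) i) (nth (Wone _) (Lws b) j))) => /=.
apply: leq_add; [exact: (all_nthP (Wone _) (Lws_len a)) | exact: (all_nthP (Wone _) (Lws_len b))].
Qed.

Lemma in_LP i v : in_L mul one S i v <-> v \in Lsp i.
Proof.
split.
  move=> [ws [Hall Hv]]; move: v Hv; apply/subvP/span_subvP => x /mem_map_ev[j Hj ->].
  by apply: Lsp_word; apply: (all_nthP (Wone _) Hall).
move=> Hv; exists (Lws i); split => //; exact: Lws_len.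
Qed.

Lemma L_fullP i : L_full mul one S i <-> Lsp i = fullv.
Proof.
split.
  by move=> H; apply/eqP; rewrite eqEdim subvf /=; apply: dimvS; apply/subvP => v _; apply/in_LP.
by move=> E v; apply/in_LP; rewrite E memvf.
Qed.

Lemma one_Lsp i : one \in Lsp i.
Proof. exact: (@Lsp_word i (Wone _)). Qed.

Lemma Lsp0 : (Lsp 0 <= <[one]>)%VS.
Proof. by apply: Lsp_sub => w; rewrite leqn0 => /eqP /ev_len0 ->; apply: memv_line. Qed.

Lemma gen_Lsp j (Hj : (j < size S)%N) : S`_j \in Lsp 1.
Proof. exact: (@Lsp_word 1 (Wgen (Ordinal Hj))). Qed.

Lemma closure (U : {vspace V}) : one \in U -> (forall j, (j < size S)%N -> S`_j \in U) ->
  (forall x y, x \in U -> y \in U -> mul x y \in U) -> forall w, ev w \in U.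
Proof. move=> H1 HS HM; elim=> //= [[j Hj]|u IHu v IHv]; [exact: HS | exact: HM]. Qed.

Lemma gen_full (U : {vspace V}) : generates mul one S -> (forall w, ev w \in U) -> U = fullv.
Proof.
move=> G H; apply/eqP; rewrite eqEdim subvf /=; apply: dimvS; apply/subvP => v _.
have [ws Hv] := G v; move: v Hv; apply/subvP/span_subvP => x /mem_map_ev[j _ ->]; exact: H.
Qed.


Local Notation N := (\dim (fullv : {vspace V})).

Lemma full_dim (U : {vspace V}) : (N <= \dim U)%N -> U = fullv.
Proof. by move=> H; apply/eqP; rewrite eqEdim subvf. Qed.

Lemma notfull_dim (U : {vspace V}) : U != fullv -> (\dim U < N)%N.
Proof. by move=> H; rewrite ltnNge; apply: contra H => /full_dim ->. Qed.

Lemma full_mono i j : (i <= j)%N -> Lsp i = fullv -> Lsp j = fullv.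
Proof. by move=> ij Hi; apply: full_dim; rewrite -Hi; apply: dimvS; apply: Lsp_mono. Qed.

Lemma growth k : generates mul one S -> (1 <= k)%N -> Lsp k != fullv ->
  (\dim (Lsp k) < \dim (Lsp (k + k)))%N.
Proof.
move=> G k1 Hk; rewrite ltnNge; apply: contra Hk => Hd.
have E : Lsp k = Lsp (k + k).
  by apply/eqP; rewrite eqEdim Hd andbT; apply: Lsp_mono; rewrite leq_addl.
apply/eqP; apply: gen_full => //; apply: closure.
- exact: one_Lsp.
- by move=> j Hj; apply: (subvP (Lsp_mono k1)); apply: gen_Lsp.
- by move=> x y Hx Hy; rewrite E; apply: Lsp_mul.
Qed.

Lemma growth_iter s k : generates mul one S -> (1 <= k)%N ->
  Lsp (2 ^ s * k) = fullv \/ (\dim (Lsp k) + s <= \dim (Lsp (2 ^ s * k)))%N.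
Proof.
move=> G k1; elim: s => [|s IH]; first by right; rewrite expn0 mul1n addn0.
have E : (2 ^ s.+1 * k = 2 ^ s * k + 2 ^ s * k)%N by rewrite expnS -mulnA mul2n addnn.
have [Hf|Hnf] := eqVneq (Lsp (2 ^ s.+1 * k)) fullv; first by left.
right; case: IH => [Hs|Hs].
  by move: Hnf; rewrite (full_mono _ Hs) ?eqxx // E leq_addr.
have Hs' : Lsp (2 ^ s * k) != fullv.
  by apply: contra Hnf => /eqP Hs'; rewrite (full_mono _ Hs') // E leq_addr.
have H1 : (1 <= 2 ^ s * k)%N by rewrite muln_gt0 expn_gt0.
have := growth G H1 Hs'; rewrite -E addnS => H.
exact: leq_ltn_trans Hs H.
Qed.

Lemma one_neq0 : (0 < N)%N -> one != 0.
Proof.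
move=> NP; apply/negP => /eqP o0; move: NP; rewrite lt0n; apply/negP; rewrite negbK.
have : (fullv : {vspace V}) = 0%VS.
  apply/eqP; rewrite -subv0; apply/subvP => x _; rewrite memv0.
  by rewrite -(mul1x x) o0 mul0l.
by move=> ->; rewrite dimv0.
Qed.

Lemma base : generates mul one S -> (1 < N)%N -> Lsp 1 = fullv \/ (2 <= \dim (Lsp 1))%N.
Proof.
move=> G N1; have [Hf|Hnf] := eqVneq (Lsp 1) fullv; first by left.
right.
case: (classic (exists j, (j < size S)%N /\ S`_j \notin <[one]>%VS)).
  move=> [j [Hj Hn]].
  have H : (<[one]> <= Lsp 1)%VS by rewrite -memvE one_Lsp.
  have := dim_lt H (gen_Lsp Hj) Hn.
  by rewrite dim_vline one_neq0 // ltnW.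
move=> Hno.
have L1 : forall x y, x \in <[one]>%VS -> y \in <[one]>%VS -> mul x y \in <[one]>%VS.
  move=> x y; rewrite -span_seq1 => Hx Hy; apply: (mul_span2 Hx Hy) => i j.
  by case: i => // _; case: j => // _ /=; rewrite mul1x span_seq1 memv_line.
have := gen_full G (closure (memv_line one) _ L1).
have Hall : forall j, (j < size S)%N -> S`_j \in <[one]>%VS.
  move=> j Hj; apply/negPn/negP => Hn; apply: Hno; by exists j.
move=> /(_ Hall) E; move: N1; rewrite -E dim_vline.
by case: (one != 0).
Qed.

Lemma dimL_pow t : generates mul one S -> (1 < N)%N ->
  Lsp (2 ^ t) = fullv \/ (t + 2 <= \dim (Lsp (2 ^ t)))%N.
Proof.
move=> G N1; case: (base G N1) => [H1|H1].
  by left; apply: (full_mono _ H1); rewrite expn_gt0.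
have := growth_iter t G (leqnn 1); rewrite muln1 => [[H|H]]; first by left.
by right; rewrite addnC; apply: leq_trans H; rewrite leq_add2r.
Qed.

Lemma upper : generates mul one S -> (1 < N)%N -> Lsp (2 ^ (N - 2)) = fullv.
Proof.
move=> G N1; case: (dimL_pow (N - 2) G N1) => // H.
by apply: full_dim; apply: leq_trans H; rewrite subnK.
Qed.


End Words.

Section LongB.
Variables (n : nat) (e : seq V).
Hypothesis n2 : (2 < n)%N.
Hypothesis se : size e = n.
Hypothesis e0 : e`_0 = one.
Hypothesis esq : forall i, (1 <= i)%N -> (i <= n - 2)%N -> mul e`_i e`_i = e`_i.+1.
Hypothesis econd : forall p q : nat, (p < n)%N -> (q < n)%N -> p != q ->
      mul e`_p e`_q \in <<take (maxn p q).+1 e>>%VS.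
Hypothesis ebasis : basis_of fullv e.
Hypothesis hn : \dim (fullv : {vspace V}) = n.

Local Notation A k := (<<take k.+1 e>>%VS).

Lemma prodA k : (k.+1 <= n - 1)%N -> forall u v, u \in A k -> v \in A k -> mul u v \in A k.+1.
Proof.
move=> kn u v Hu Hv; apply: (take_span_mul Hu Hv) => i j Hi Hj Hin Hjn.
have [ij|ij] := eqVneq i j.
  subst j; clear Hj Hjn; move: Hi Hin; case: i => [|i] Hi Hin.
    by rewrite e0 mul1x -e0; apply: e_in_take.
  rewrite esq //; last by lia.
  apply: e_in_take; lia.
apply: (subvP (take_mono _ _)); last by apply: econd => //; rewrite -se.
lia.
Qed.

Lemma prodB_aux k i j : (k <= n - 1)%N -> (i <= k)%N -> (j <= k)%N -> ~~ ((i == k) && (j == k)) ->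
  (i < size e)%N -> (j < size e)%N -> mul e`_i e`_j \in A k.
Proof.
move=> kn Hi Hj Hn Hin Hjn.
have [ij|ij] := eqVneq i j.
  subst j; clear Hjn Hj; move: Hi Hin Hn; case: i => [|i] Hi Hin Hn.
    by rewrite e0 mul1x -e0; apply: e_in_take.
  have ik : (i.+1 < k)%N by move: Hn; rewrite andbb; lia.
  rewrite esq //; last by lia.
  apply: e_in_take; lia.
apply: (subvP (take_mono _ _)); last by apply: econd => //; rewrite -se.
lia.
Qed.

Lemma prodB1 k u v : (k.+1 <= n - 1)%N -> u \in A k.+1 -> v \in A k -> mul u v \in A k.+1.
Proof.
move=> kn Hu Hv; apply: (take_span_mul Hu Hv) => i j Hi Hj Hin Hjn.
apply: prodB_aux => //; lia.
Qed.

Lemma prodB2 k u v : (k.+1 <= n - 1)%N -> u \in A k -> v \in A k.+1 -> mul u v \in A k.+1.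
Proof.
move=> kn Hu Hv; apply: (take_span_mul Hu Hv) => i j Hi Hj Hin Hjn.
apply: prodB_aux => //; lia.
Qed.

Local Notation S1 := [:: e`_1].
Local Notation ev := (word_eval mul one (S:=S1)).

Lemma word_level (w : word 1) k : (word_len w < 2 ^ k)%N -> (k <= n - 1)%N -> ev w \in A k.
Proof.
elim: w k => [|j|u IHu v IHv] k /= Hl kn.
- by rewrite -e0; apply: e_in_take => //; lia.
- case: j => [[|//] ?] /=; apply: e_in_take; last by lia.
  by case: k Hl {kn} => //; rewrite expn0.
- case: k Hl kn => [|k] Hl kn.
    have [u0 v0] : word_len u = 0%N /\ word_len v = 0%N by move: Hl; rewrite expn0; lia.
    by rewrite (@ev_len0 S1 u u0) (@ev_len0 S1 v v0) mul1x -e0; apply: e_in_take => //; lia.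
  have E : (2 ^ k.+1 = 2 ^ k + 2 ^ k)%N by rewrite expnS mul2n addnn.
  have [ua|ua] := ltnP (word_len u) (2 ^ k); have [vb|vb] := ltnP (word_len v) (2 ^ k).
  + by apply: prodA; [lia | apply: IHu; lia | apply: IHv; lia].
  + by apply: prodB2; [lia | apply: IHu; lia | apply: IHv; lia].
  + by apply: prodB1; [lia | apply: IHu; lia | apply: IHv; lia].
  + lia.
Qed.


Lemma pw_ev m : (m <= n - 2)%N -> ev (pw m) = e`_m.+1.
Proof.
elim: m => [|m IH] Hm //=; rewrite IH; last by lia.
by apply: esq; lia.
Qed.

Lemma S1_full : Lsp S1 (2 ^ (n - 2)) = fullv.
Proof.
apply/eqP; rewrite eqEdim subvf /=; apply: dimvS.
move/andP: ebasis => [/eqP <- _]; apply/span_subvP => x /(nthP 0)[i]; rewrite se => Hi <-.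
case: i Hi => [|m] Hm; first by rewrite e0; apply: one_Lsp.
rewrite -pw_ev; last by lia.
by apply: Lsp_word; rewrite pw_len leq_pexp2l //; lia.
Qed.

Lemma S1_length : set_length mul one S1 (2 ^ (n - 2)) /\ generates mul one S1.
Proof.
have Hf : L_full mul one S1 (2 ^ (n - 2)) by apply/L_fullP; apply: S1_full.
split; last by move=> v; have [ws [_ Hv]] := Hf v; exists ws.
split => // j /L_fullP Hj; rewrite leqNgt; apply/negP => jlt.
have : (Lsp S1 j <= A (n - 2))%VS.
  apply: Lsp_sub => w Hw; apply: word_level; last by lia.
  exact: leq_ltn_trans Hw jlt.
rewrite Hj => /dimvS; rewrite hn => H.
have := leq_trans H (dim_span _); rewrite size_take_min; lia.
Qed.


Lemma long_alg : alg_length mul one (2 ^ (n - 2)).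
Proof.
have [H1 H2] := S1_length; split; first by exists S1.
move=> S k G [_ Hmin]; apply: Hmin; apply/L_fullP; rewrite -hn; apply: upper => //.
by rewrite hn; lia.
Qed.

End LongB.

Section Forward.
Variables (S : seq V) (n : nat).
Hypothesis n2 : (2 < n)%N.
Hypothesis hn : \dim (fullv : {vspace V}) = n.
Hypothesis G : generates mul one S.
Hypothesis hlen : set_length mul one S (2 ^ (n - 2)).

Local Notation L := (Lsp S).
Local Notation ev := (word_eval mul one (S:=S)).
Definition cc k := ((2 ^ k)./2)%N.
Definition pm k := predn (2 ^ k).
Local Notation B k := (L (cc k)).

Lemma cc0 : cc 0 = 0%N. Proof. by []. Qed.
Lemma ccS k : cc k.+1 = (2 ^ k)%N.
Proof. by rewrite /cc expnS mul2n doubleK. Qed.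

Lemma full2 : L (2 ^ (n - 2)) = fullv.
Proof. by apply/L_fullP; case: hlen. Qed.

Lemma notfull j : (j < 2 ^ (n - 2))%N -> L j != fullv.
Proof.
move=> jl; apply/negP => /eqP /L_fullP Hj; case: hlen => _ /(_ _ Hj); lia.
Qed.

Lemma N1 : (1 < \dim (fullv : {vspace V}))%N.
Proof. by rewrite hn; lia. Qed.

Lemma lowB k : (k <= n - 1)%N -> (k.+1 <= \dim (B k))%N.
Proof.
case: k => [|k] kn.
  have H : (<[one]> <= L 0)%VS by rewrite -memvE one_Lsp.
  by apply: leq_trans (dimvS H); rewrite dim_vline one_neq0 // ltnW // N1.
rewrite ccS; case: (dimL_pow k G N1) => [->|H]; last by rewrite addn2 in H.
by rewrite hn; lia.
Qed.

Lemma upB k : (k <= n - 1)%N -> (\dim (L (pm k)) <= k.+1)%N.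
Proof.
case: k => [|k] kn.
  by apply: leq_trans (dimvS (Lsp0 S)) _; rewrite dim_vline; case: (one != 0).
have [->|kn'] := eqVneq k.+1 (n - 1)%N.
  by apply: leq_trans (dimvS (subvf _)) _; rewrite hn; lia.
have k1 : (1 <= (pm k.+1))%N by rewrite /pm expnS; have := expn_gt0 2 k; lia.
set s := (n - 2 - k.+1)%N.
have E : (2 ^ s * 2 ^ k.+1 = 2 ^ (n - 2))%N by rewrite -expnD; congr expn; lia.
have lt : (2 ^ s * (pm k.+1) < 2 ^ (n - 2))%N.
  rewrite -E ltn_pmul2l ?expn_gt0 //; rewrite /pm expnS; have := expn_gt0 2 k; lia.
case: (growth_iter s G k1) => [Hf|Hd]; first by move: (notfull lt); rewrite Hf eqxx.
have := notfull_dim (notfull lt); rewrite hn => H.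
have : (\dim (L (pm k.+1)) + s < n)%N := leq_ltn_trans Hd H.
rewrite /s; lia.
Qed.

Lemma cc_le k : (cc k <= (pm k))%N.
Proof. by case: k => // k; rewrite /pm ccS expnS; have := expn_gt0 2 k; lia. Qed.

Lemma DB k : (k <= n - 1)%N -> L (pm k) = B k /\ \dim (B k) = k.+1.
Proof.
move=> kn; have H1 := lowB kn; have H2 := upB kn.
have Hs : (B k <= L (pm k))%VS by apply: Lsp_mono; apply: cc_le.
have E : B k = L (pm k).
  by apply/eqP; rewrite eqEdim Hs; apply: leq_trans H2 H1.
by split => //; apply/eqP; rewrite eqn_leq H1 andbT E.
Qed.

Lemma e1_ex : exists2 x, x \in L 1 & x \notin L 0.
Proof.
apply/subvPn; apply/negP => H.
have h1 : (1 <= n - 1)%N by lia.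
have h0 : (0 <= n - 1)%N by lia.
have [_ D1] := DB h1; have [_ D0] := DB h0.
have := dimvS H; move: D1 D0; rewrite /cc /= => -> ->; by [].
Qed.


Section Build.
Variable x1 : V.
Hypothesis x1L : x1 \in L 1.
Hypothesis x1n : x1 \notin L 0.

Definition sq (x : V) := mul x x.
Definition ee := one :: mkseq (fun i => iter i sq x1) (n - 1).

Lemma see : size ee = n.
Proof. rewrite /= size_mkseq; lia. Qed.

Lemma ee0 : ee`_0 = one. Proof. by []. Qed.

Lemma eeS i : (i < n - 1)%N -> ee`_i.+1 = iter i sq x1.
Proof. by move=> Hi; rewrite /= nth_mkseq. Qed.

Lemma eesq i : (1 <= i)%N -> (i <= n - 2)%N -> mul ee`_i ee`_i = ee`_i.+1.
Proof.
case: i => // i _ Hi; rewrite !eeS //; try lia.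
Qed.


Lemma cc_succ k : (cc k <= cc k.+1)%N.
Proof. case: k => [|k] //; rewrite !ccS expnS; have := expn_gt0 2 k; lia. Qed.

Definition Hyp k := forall i, (i <= k)%N -> <<take i.+1 ee>>%VS = B i.

Lemma stepA k : (k.+1 <= n - 1)%N -> Hyp k -> ee`_k.+1 \in B k.+1.
Proof.
case: k => [|k] kn H; first by rewrite eeS //=; lia.
rewrite -eesq; try lia.
rewrite ccS expnS mul2n -addnn; apply: Lsp_mul; rewrite -ccS -H //;
  apply: e_in_take => //; rewrite see; lia.
Qed.

Lemma stepB k : (k.+1 <= n - 1)%N -> Hyp k -> ee`_k.+1 \notin B k.
Proof.
case: k => [|k] kn H; first by rewrite eeS //=; lia.
set x := ee`_k.+2.
have xB := stepA kn H.
  have hk1 : (k.+1 <= n - 1)%N by lia.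
  have hk0 : (k <= n - 1)%N by lia.
  have [DP DBk] := DB hk1.
  have [_ DBk1] := DB kn.
  have [DPk' _] := DB hk0.
  set P := L (pm k.+1).
  have e_in : forall i, (i <= k.+1)%N ->
      ee`_i \in L (if i == k.+1 then 2 ^ k else pm k)%N.
    move=> i Hi; case: eqP => [->|/eqP ne].
      by rewrite -ccS -H //; apply: e_in_take => //; rewrite see; lia.
    rewrite DPk' -H; last by lia.
    apply: e_in_take; first by lia.
    by rewrite see; lia.
  have prod : forall i j, (i <= k.+1)%N -> (j <= k.+1)%N -> ~~ ((i == k.+1) && (j == k.+1)) ->
      mul ee`_i ee`_j \in P.
    move=> i j Hi Hj Hn; apply: (subvP (Lsp_mono _ _)); last first.
      by apply: Lsp_mul; [apply: e_in | apply: e_in].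
    move: Hn; rewrite /pm expnS; have := expn_gt0 2 k.
    by case: (i == k.+1); case: (j == k.+1) => //=; lia.
  set W := (P + <[x]>)%VS.
  have PW : (P <= W)%VS by apply: addvSl.
  have claim : (L (2 ^ k.+1) <= W)%VS.
    apply: Lsp_sub => w; elim: w => [|j|u IHu v IHv] /= Hl.
    - by apply: (subvP PW); apply: one_Lsp.
    - apply: (subvP PW); apply: (@Lsp_word _ _ (Wgen j)) => /=.
      by rewrite /pm expnS; have := expn_gt0 2 k; lia.
    - have [Hs|Hs] := leqP (word_len u + word_len v) (pm k.+1).
        by apply: (subvP PW); apply: (@Lsp_word _ _ (Wmul u v)).
      have [u0|u0] := eqVneq (word_len u) 0%N.
        by rewrite (ev_len0 u0) mul1x; apply: IHv; lia.
      have [v0|v0] := eqVneq (word_len v) 0%N.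
        by rewrite (ev_len0 v0) mulx1; apply: IHu; lia.
      have Hu : ev u \in <<take k.+2 ee>>%VS.
        rewrite H // -DP; apply: Lsp_word; move: Hs Hl; rewrite /pm; lia.
      have Hv : ev v \in <<take k.+2 ee>>%VS.
        rewrite H // -DP; apply: Lsp_word; move: Hs Hl; rewrite /pm; lia.
      apply: (take_span_mul Hu Hv) => i j Hi Hj _ _.
      case: (boolP ((i == k.+1) && (j == k.+1))) => [/andP[/eqP -> /eqP ->]|Hn].
        rewrite eesq; try lia.
        by apply: (subvP (addvSr _ _)); apply: memv_line.
      by apply: (subvP PW); apply: prod.
  apply/negP => xBk.
  have WP : (W <= P)%VS by rewrite subv_add subvv /= -memvE /P DP.
  have := dimvS (subv_trans claim WP); rewrite -ccS DBk1 /P DP DBk; lia.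
Qed.

Lemma step k : (k.+1 <= n - 1)%N -> Hyp k -> <<take k.+2 ee>>%VS = B k.+1.
Proof.
move=> kn H.
have xB := stepA kn H; have xn := stepB kn H.
set x := ee`_k.+1 in xB xn *.
rewrite (take_nth 0) ?see; last by lia.
rewrite -cats1 span_cat span_seq1 H //; apply/eqP; rewrite eqEdim subv_add.
rewrite Lsp_mono ?cc_succ //= -memvE xB /=.
have hk0 : (k <= n - 1)%N by lia.
have [_ D1] := DB kn; have [_ D0] := DB hk0.
rewrite D1; have := dim_lt (addvSl (B k) <[x]>) _ xn; rewrite D0; apply.
by apply: (subvP (addvSr _ _)); apply: memv_line.
Qed.


Lemma Qall k : (k <= n - 1)%N -> Hyp k.
Proof.
elim: k => [|k IH] kn i Hi.
  move: Hi; rewrite leqn0 => /eqP ->; rewrite /ee /= take0 span_seq1.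
  by apply: subv_anti; rewrite Lsp0 -memvE one_Lsp.
have [Hik|Hik] := leqP i k; first by apply: IH => //; lia.
have -> : i = k.+1 by lia.
by apply: step => //; apply: IH; lia.
Qed.

Lemma ee_span : <<ee>>%VS = fullv.
Proof.
have h : (n - 1 <= n - 1)%N by [].
have := Qall h (leqnn _); have -> : (n - 1).+1 = size ee by rewrite see; lia.
rewrite take_size => ->; have -> : (n - 1 = (n - 2).+1)%N by lia.
by rewrite ccS full2.
Qed.

Lemma key p q : (p < q)%N -> (q < n)%N ->
  mul ee`_p ee`_q \in <<take q.+1 ee>>%VS /\ mul ee`_q ee`_p \in <<take q.+1 ee>>%VS.
Proof.
case: q => // q pq qn.
have hq : (q.+1 <= n - 1)%N by lia.
have hq' : (q <= n - 1)%N by lia.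
have [DPq _] := DB hq; have [DPq' _] := DB hq'.
have ep : ee`_p \in L (pm q).
  by rewrite DPq' -(Qall hq' (leqnn _)); apply: e_in_take; rewrite ?see; lia.
have eq : ee`_q.+1 \in L (2 ^ q).
  by rewrite -ccS -(Qall hq (leqnn _)); apply: e_in_take; rewrite ?see; lia.
have le : (pm q + 2 ^ q <= pm q.+1)%N by rewrite /pm expnS; have := expn_gt0 2 q; lia.
have le' : (2 ^ q + pm q <= pm q.+1)%N by rewrite addnC.
rewrite (Qall hq (leqnn _)) -DPq; split; apply: (subvP (Lsp_mono _ _)).
- exact: le.
- exact: Lsp_mul.
- exact: le'.
- exact: Lsp_mul.
Qed.

Lemma forward_ex : exists e : seq V,
    long_basis mul one n e /\
    forall p q : nat, (p < n)%N -> (q < n)%N -> p != q ->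
      mul e`_p e`_q \in <<take (maxn p q).+1 e>>%VS.
Proof.
exists ee; split.
  split; [exact: see | | exact: ee0 | exact: eesq].
  by rewrite basisEdim ee_span subvv see hn leqnn.
move=> p q pn qn /negPf pq; have [lt|gt|eq] := ltngtP p q.
- by case: (key lt qn).
- by case: (key gt pn).
- by move: pq; rewrite eq eqxx.
Qed.

End Build.
End Forward.
End Infra.

Theorem theorem6p5 (F : fieldType) (V : vectType F) (mul : V -> V -> V) (one : V)
  (mulDl : forall (a : F) (x y z : V), mul (a *: x + y) z = a *: mul x z + mul y z)
  (mulDr : forall (a : F) (x y z : V), mul z (a *: x + y) = a *: mul z x + mul z y)
  (mul1x : forall x : V, mul one x = x)
  (mulx1 : forall x : V, mul x one = x)
  (n : nat) (hn : \dim (fullv : {vspace V}) = n) (n_gt2 : (2 < n)%N) :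
  alg_length mul one (2 ^ (n - 2)) <->
  exists e : seq V,
    long_basis mul one n e /\
    forall p q : nat, (p < n)%N -> (q < n)%N -> p != q ->
      mul e`_p e`_q \in span (take (maxn p q).+1 e).
Proof.
split.
  move=> [[S [G Hlen]] _].
  have [x1 x1L x1n] := e1_ex mulDl mulDr mul1x n_gt2 hn G Hlen.
  exact: (forward_ex mulDl mulDr mul1x mulx1 n_gt2 hn G Hlen x1L x1n).
move=> [e [[se Hb e0 esq] econd]].
exact: (long_alg mulDl mulDr mul1x n_gt2 se e0 esq econd Hb hn).
Qed.
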